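(* Let $K$ be a coloring of the nodes of the network $\mathcal{G}_{mn}$. Suppose that for any two nodes $c,d$ of the same color and every color $k$: (i) the number of nodes of color $k$ in the same row as $c$ and distinct from $c$ equals the number of nodes of color $k$ in the same row as $d$ and distinct from $d$; and (ii) the analogous equality holds for columns. (That is, $K$ is balanced for the network obtained from $\mathcal{G}_{mn}$ by deleting the diagonal arrows and ignoring internal arrows.) Then $K$ is balanced for $\mathcal{G}_{mn}$.
   Context: For integers $m,n\ge1$, the network $\mathcal{G}_{mn}$ has node set $\{(i,j):1\le i\le m,\ 1\le j\le n\}$ ($i$ indexes rows, $j$ columns), all nodes of the same type. For each ordered pair of distinct nodes $(c,d)$ there is exactly one arrow with head $c$ and tail $d$, whose type is: ''row'' if $c,d$ lie in the same row, ''column'' if they lie in the same column, ''diagonal'' otherwise; in addition each node has an internal arrow from itself to itself (a fourth type). A coloring is a map from nodes to a set of colors. A coloring is balanced if whenever nodes $c,d$ have the same color, for every arrow type and every color $k$ the number of input arrows of that type to $c$ with tail of color $k$ equals the corresponding number for $d$. *)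

(* Defs.v *)
From mathcomp Require Import all_boot.
Set Implicit Arguments. Unset Strict Implicit. Unset Printing Implicit Defensive.

(* Nodes of G_mn: pairs (i, j) with i : 'I_m the row, j : 'I_n the column
   (0-based indexing of rows 1..m, columns 1..n). *)
Definition node (m n : nat) : finType := ('I_m * 'I_n)%type.

Inductive arrow_type := RowA | ColA | DiagA | IntA.

Definition arrow_type_eqb (a b : arrow_type) : bool :=
  match a, b with
  | RowA, RowA | ColA, ColA | DiagA, DiagA | IntA, IntA => true
  | _, _ => false end.

(* Type of the unique arrow with head c and tail d in G_mn. For c = d this
   is the internal arrow (the only arrow from a node to itself). *)
Definition arrow_of (m n : nat) (c d : node m n) : arrow_type :=
  if c == d then IntA
  else if c.1 == d.1 then RowA
  else if c.2 == d.2 then ColA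
  else DiagA.

Definition input_count (m n : nat) (C : eqType) (K : node m n -> C)
    (t : arrow_type) (k : C) (c : node m n) : nat :=
  #|[set d : node m n | arrow_type_eqb (arrow_of c d) t && (K d == k)]|.

Definition balanced_Gmn (m n : nat) (C : eqType) (K : node m n -> C) : Prop :=
  forall c d : node m n, K c = K d ->
    forall (t : arrow_type) (k : C), input_count K t k c = input_count K t k d.

Definition row_count (m n : nat) (C : eqType) (K : node m n -> C)
    (k : C) (c : node m n) : nat :=
  #|[set d : node m n | (d != c) && (d.1 == c.1) && (K d == k)]|.

Definition col_count (m n : nat) (C : eqType) (K : node m n -> C)
    (k : C) (c : node m n) : nat :=
  #|[set d : node m n | (d != c) && (d.2 == c.2) && (K d == k)]|.

(* Main.v *)
Require Import Defs.
From mathcomp Require Import all_boot.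

Lemma cnt_sum (T : finType) (P : pred T) : #|[set x | P x]| = \sum_x (P x : nat).
Proof.
rewrite -sum1_card big_mkcond; apply: eq_bigr => x _; rewrite inE; by case: (P x).
Qed.

Lemma total_split (m n : nat) (C : eqType) (K : node m n -> C) k c :
  #|[set x : node m n | K x == k]| =
  input_count K RowA k c + input_count K ColA k c + input_count K DiagA k c
  + input_count K IntA k c.
Proof.
rewrite /input_count !cnt_sum -!big_split /=; apply: eq_bigr => x _.
by case: (arrow_of c x); case: (K x == k).
Qed.

Lemma row_eq (m n : nat) (C : eqType) (K : node m n -> C) k c :
  input_count K RowA k c = row_count K k c.
Proof.
rewrite /input_count /row_count; apply: eq_card => x; rewrite !inE /arrow_of.
case: c x => [a b] [a' b'] /=; rewrite !xpair_eqE /= [a' == a]eq_sym [b' == b]eq_sym.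
by case: (a == a'); case: (b == b'); case: (K (a', b') == k).
Qed.

Lemma col_eq (m n : nat) (C : eqType) (K : node m n -> C) k c :
  input_count K ColA k c = col_count K k c.
Proof.
rewrite /input_count /col_count; apply: eq_card => x; rewrite !inE /arrow_of.
case: c x => [a b] [a' b'] /=; rewrite !xpair_eqE /= [a' == a]eq_sym [b' == b]eq_sym.
by case: (a == a'); case: (b == b'); case: (K (a', b') == k).
Qed.

Lemma int_eq (m n : nat) (C : eqType) (K : node m n -> C) k c :
  input_count K IntA k c = (K c == k).
Proof.
rewrite /input_count (_ : [set _ | _] = [set x | (x == c) && (K c == k)]) ?cnt_sum.
  rewrite (bigD1 c) //= eqxx big1 ?addn0 // => x /negPf xc.
  by rewrite xc.
apply/setP => x; rewrite !inE /arrow_of.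
case: (eqVneq c x) => [->|cx]; first by rewrite ?eqxx.
rewrite /=.
by case: (_ == _) => //; case: (_ == _).
Qed.

Theorem lemma3p3 (m n : nat) (C : eqType) (K : node m n -> C) :
  (forall c d : node m n, K c = K d -> forall k : C,
     row_count K k c = row_count K k d /\ col_count K k c = col_count K k d) ->
  balanced_Gmn K.
Proof.
move=> H c d Kcd t k.
have [Hr Hc] := H c d Kcd k.
have Hi : input_count K IntA k c = input_count K IntA k d by rewrite !int_eq Kcd.
case: t; rewrite ?row_eq ?col_eq //.
have := @total_split _ _ _ K k c; have := @total_split _ _ _ K k d.
rewrite !row_eq !col_eq Hr Hc Hi => ->.
by move/eqP; rewrite !eqn_add2r eqn_add2l => /eqP.
Qed.
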